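(* Let $\phi$ be an LTL formula in negation normal form that is in neXt Normal Form. If $A$ is a satisfying assignment of $\phi^p$, then there is a propositional assignment $A'$ for $\phi$ with $\phi\in A'$ such that $A'\cap\mathrm{atoms}(\phi)\subseteq A$. Conversely, if $A'$ is a propositional assignment for $\phi$ with $\phi\in A'$, then there is a satisfying assignment $A$ of $\phi^p$ such that $A'\cap\mathrm{atoms}(\phi)\subseteq A$.
   Context: $AP$ is a finite set of atoms, $L=\{a,\neg a: a\in AP\}$. LTL formulas in NNF: $\phi::= \mathit{tt}\mid \mathit{ff}\mid \ell \mid \phi\wedge\phi\mid\phi\vee\phi\mid \phi U\phi\mid \phi R\phi\mid X\phi$, $\ell\in L$. Propositional atoms: $\mathrm{atoms}(\phi)=\{\phi\}$ if $\phi$ is an atom, Next, Until or Release formula; $\mathrm{atoms}(\neg\psi)=\mathrm{atoms}(\psi)$; $\mathrm{atoms}(\phi_1\wedge\phi_2)=\mathrm{atoms}(\phi_1\vee\phi_2)=\mathrm{atoms}(\phi_1)\cup\mathrm{atoms}(\phi_2)$. $\phi$ is in XNF if $\mathrm{atoms}(\phi)$ contains no Until or Release formula. $\phi^p$ denotes $\phi$ viewed as a propositional formula whose propositional variables are the elements of $\mathrm{atoms}(\phi)$; a satisfying assignment $A$ of $\phi^p$ is identified with the set of variables in $\mathrm{atoms}(\phi)$ it makes true. The closure $cl(\phi)$ is the smallest set containing $\phi$, closed under immediate subformulas (operands of $\wedge,\vee,U,R,X,\neg$), and containing $X\psi$ for every Until or Release formula $\psi$ in it. A propositional assignment for $\phi$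 is a set $A'\subseteq cl(\phi)\cup L$ such that: for each $a\in AP$ exactly one of $a,\neg a$ is in $A'$; $(\theta_1\wedge\theta_2)\in A'\Rightarrow\theta_1,\theta_2\in A'$; $(\theta_1\vee\theta_2)\in A'\Rightarrow\theta_1\in A'$ or $\theta_2\in A'$; $(\theta_1U\theta_2)\in A'\Rightarrow\theta_2\in A'$ or both $\theta_1\in A'$ and $X(\theta_1U\theta_2)\in A'$; $(\theta_1R\theta_2)\in A'\Rightarrow\theta_2\in A'$ and ($\theta_1\in A'$ or $X(\theta_1R\theta_2)\in A'$).
   Formalization: A propositional assignment for φ never contains ff: its definition gains the clause ff ∉ A′, which constrains both directions through A′. The statement above fails without it. *)

(* Defs.v *)
From mathcomp Require Import all_boot.
Set Implicit Arguments. Unset Strict Implicit. Unset Printing Implicit Defensive.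

(* LTL formulas in negation normal form over atoms AP.
   [Lit true a] is the literal a, [Lit false a] is the literal ~a. *)
Inductive form (AP : Type) : Type :=
| Tt | Ff
| Lit (b : bool) (a : AP)
| And (f g : form AP) | Or (f g : form AP)
| Until (f g : form AP) | Release (f g : form AP)
| Next (f : form AP).
Arguments Tt {AP}. Arguments Ff {AP}.

Section Defs.
Variable AP : finType.
Notation form := (form AP).

Definition fset_ := form -> Prop.

Fixpoint atoms (f : form) : fset_ :=
  match f with
  | Tt | Ff => fun _ => False
  | Lit true a => fun g => g = Lit true a
  | Lit false a => fun g => g = Lit true a
  | And f1 f2 | Or f1 f2 => fun g => atoms f1 g \/ atoms f2 g
  | Until _ _ | Release _ _ | Next _ => fun g => g = f
  end.

Definition is_UR (g : form) : Prop :=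
  match g with Until _ _ | Release _ _ => True | _ => False end.

Definition xnf (phi : form) : Prop := forall g, atoms phi g -> ~ is_UR g.

(* Evaluation of phi^p under the set A of propositional variables made true. *)
Fixpoint peval (A : fset_) (f : form) : Prop :=
  match f with
  | Tt => True
  | Ff => False
  | Lit true a => A (Lit true a)
  | Lit false a => ~ A (Lit true a)
  | And f1 f2 => peval A f1 /\ peval A f2
  | Or f1 f2 => peval A f1 \/ peval A f2
  | Until _ _ | Release _ _ | Next _ => A f
  end.

(* A is a satisfying assignment of phi^p (a set of variables of phi^p). *)
Definition sat_assign (phi : form) (A : fset_) : Prop :=
  (forall g, A g -> atoms phi g) /\ peval A phi.

Inductive cl (phi : form) : form -> Prop :=
| cl_self : cl phi phi
| cl_andl f g : cl phi (And f g) -> cl phi f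
| cl_andr f g : cl phi (And f g) -> cl phi g
| cl_orl f g : cl phi (Or f g) -> cl phi f
| cl_orr f g : cl phi (Or f g) -> cl phi g
| cl_untill f g : cl phi (Until f g) -> cl phi f
| cl_untilr f g : cl phi (Until f g) -> cl phi g
| cl_releasel f g : cl phi (Release f g) -> cl phi f
| cl_releaser f g : cl phi (Release f g) -> cl phi g
| cl_next f : cl phi (Next f) -> cl phi f
| cl_neg a : cl phi (Lit false a) -> cl phi (Lit true a)
| cl_XU f g : cl phi (Until f g) -> cl phi (Next (Until f g))
| cl_XR f g : cl phi (Release f g) -> cl phi (Next (Release f g)).

Definition is_lit (g : form) : Prop :=
  match g with Lit _ _ => True | _ => False end.

Definition prop_assign (phi : form) (A' : fset_) : Prop :=
  (forall g, A' g -> cl phi g \/ is_lit g) /\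
      (forall a : AP, (A' (Lit true a) \/ A' (Lit false a)) /\
                      ~ (A' (Lit true a) /\ A' (Lit false a))) /\
      ~ A' Ff /\
      (forall f g, A' (And f g) -> A' f /\ A' g) /\
      (forall f g, A' (Or f g) -> A' f \/ A' g) /\
      (forall f g, A' (Until f g) -> A' g \/ (A' f /\ A' (Next (Until f g)))) /\
      (forall f g, A' (Release f g) -> A' g /\ (A' f \/ A' (Next (Release f g)))).

End Defs.

(* Main.v *)
Require Import Defs.
From mathcomp Require Import all_boot.
From Stdlib Require Import Classical.

Fixpoint psub {AP : finType} (phi g : form AP) : Prop :=
  g = phi \/ match phi with
             | And f1 f2 | Or f1 f2 => psub f1 g \/ psub f2 g
             | _ => False end.

Lemma psub_refl {AP : finType} (phi : form AP) : psub phi phi.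
Proof. by case: phi => *; left. Qed.

Lemma psub_trans {AP : finType} (phi h g : form AP) :
  psub phi h -> psub h g -> psub phi g.
Proof.
elim: phi h => [| |b a|f1 IH1 f2 IH2|f1 IH1 f2 IH2|f1 _ f2 _|f1 _ f2 _|f1 _] h /=;
  try (by move=> [->|[]]).
- by move=> [-> Hg|[H|H] Hg]; [exact: Hg|right; left; exact: IH1 H Hg|right; right; exact: IH2 H Hg].
- by move=> [-> Hg|[H|H] Hg]; [exact: Hg|right; left; exact: IH1 H Hg|right; right; exact: IH2 H Hg].
Qed.

Lemma psub_cl {AP : finType} (phi h g : form AP) :
  cl phi h -> psub h g -> cl phi g.
Proof.
elim: h g => [| |b a|f1 IH1 f2 IH2|f1 IH1 f2 IH2|f1 _ f2 _|f1 _ f2 _|f1 _] g Hc /=;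
  try (by move=> [->|[]]).
- by move=> [->//|[H|H]]; [apply: IH1 H; apply: cl_andl Hc|apply: IH2 H; apply: cl_andr Hc].
- by move=> [->//|[H|H]]; [apply: IH1 H; apply: cl_orl Hc|apply: IH2 H; apply: cl_orr Hc].
Qed.

Lemma psub_atoms {AP : finType} (phi g h : form AP) :
  psub phi g -> atoms g h -> atoms phi h.
Proof.
elim: phi g => [| |b a|f1 IH1 f2 IH2|f1 IH1 f2 IH2|f1 _ f2 _|f1 _ f2 _|f1 _] g /=;
  try (by move=> [->|[]]).
- move=> [->//|[H|H]] Ha; [left; exact: IH1 H Ha|right; exact: IH2 H Ha].
- move=> [->//|[H|H]] Ha; [left; exact: IH1 H Ha|right; exact: IH2 H Ha].
Qed.

Lemma atoms_shape {AP : finType} (phi g : form AP) :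
  atoms phi g -> (exists a, g = Lit true a) \/ is_UR g \/ exists f, g = Next f.
Proof.
elim: phi => [| |b a|f1 IH1 f2 IH2|f1 IH1 f2 IH2|f1 _ f2 _|f1 _ f2 _|f1 _] /=.
- by [].
- by [].
- by case: b => // ->; left; exists a.
- by case.
- by case.
- by move=> ->; right; left.
- by move=> ->; right; left.
- by move=> ->; right; right; exists f1.
Qed.

Arguments psub_trans {AP phi h g}.
Arguments psub_cl {AP phi h g}.
Arguments psub_atoms {AP phi g h}.
Arguments atoms_shape {AP phi g}.

Theorem theorem4 (AP : finType) (phi : form AP) :
  xnf phi ->
  (forall A : form AP -> Prop, sat_assign phi A ->
     exists A' : form AP -> Prop,
       [/\ prop_assign phi A', A' phi &
           forall g, A' g -> atoms phi g -> A g]) /\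
  (forall A' : form AP -> Prop, prop_assign phi A' -> A' phi ->
     exists A : form AP -> Prop,
       sat_assign phi A /\ (forall g, A' g -> atoms phi g -> A g)).
Proof.
move=> Hx; split.
- move=> A [HA Hp].
  pose A' := fun g : form AP => match g with
             | Lit _ _ => peval A g | _ => psub phi g /\ peval A g end.
  have noUR : forall g, A g -> ~ is_UR g by move=> g /HA; apply: Hx.
  have Hsub : forall g, A' g -> ~ is_lit g -> psub phi g /\ peval A g.
    by rewrite /A'; case=> /= *; tauto.
  have Hfill : forall g, psub phi g -> peval A g -> A' g.
    by rewrite /A'; case=> /= *; tauto.
  exists A'; split.
  + split.
      move=> g Hg; case: (classic (is_lit g)) => Hl.
        by right.
      by left; apply: (psub_cl (cl_self phi)); case: (Hsub g Hg Hl).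
    split.
      move=> a; rewrite /A' /=; split; [exact: classic | by case].
    split; first by case.
    split.
      move=> f g /Hsub[//|Hps [H1 H2]]; split; apply: Hfill => //;
        apply: (psub_trans Hps); right; [left|right]; exact: psub_refl.
    split.
      move=> f g /Hsub[//|Hps [H1|H2]]; [left|right]; apply: Hfill => //;
        apply: (psub_trans Hps); right; [left|right]; exact: psub_refl.
    split.
      by move=> f g /Hsub[//|_ H]; exfalso; exact: (noUR _ H).
    by move=> f g /Hsub[//|_ H]; exfalso; exact: (noUR _ H).
  + by apply: Hfill => //; exact: psub_refl.
  + move=> g Hg Ha; case: (atoms_shape Ha) => [[a E]|[HU|[f E]]].
    * by subst g; exact: Hg.
    * by exfalso; exact: (Hx g Ha HU).
    * by subst g; case: Hg.
- move=> A' [_ [Hl [Hff [Hand [Hor _]]]]] Hphi.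
  exists (fun g => atoms phi g /\ A' g); split; last by move=> g H1 H2.
  split; first by move=> g [].
  suff: forall g, psub phi g -> A' g ->
          peval (fun g => atoms phi g /\ A' g) g.
    by apply; first exact: psub_refl.
  elim=> [| |b a|f1 IH1 f2 IH2|f1 IH1 f2 IH2|f1 _ f2 _|f1 _ f2 _|f1 _] /=.
  + by [].
  + by move=> _ /Hff.
  + case: b => Hs Ha /=.
      by split => //; apply: (psub_atoms Hs).
    by case=> _ Ht; case: (Hl a) => _; apply; split.
  + move=> Hs /Hand [H1 H2]; split; [apply: IH1|apply: IH2] => //;
      apply: (psub_trans Hs); right; [left|right]; exact: psub_refl.
  + move=> Hs /Hor [H1|H2]; [left; apply: IH1|right; apply: IH2] => //;
      apply: (psub_trans Hs); right; [left|right]; exact: psub_refl.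
  + by move=> Hs H; split => //; apply: (psub_atoms Hs).
  + by move=> Hs H; split => //; apply: (psub_atoms Hs).
  + by move=> Hs H; split => //; apply: (psub_atoms Hs).
Qed.
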